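(* Let $b\ge 2$ be an integer, let $A_b=\{1+(b-1)r : r\in\mathbb{N}\}$, and let $\mathrm{fact}_b:A_b\to A_b$ be defined by $\mathrm{fact}_b(1+(b-1)r)=\prod_{k=1}^{r}(1+(b-1)k)$ for all $r\in\mathbb{N}$ (the empty product being $1$). Then for every $n\in A_b$, \[1\le \frac{\mathrm{fact}_b(n)}{e^{\frac{1}{b-1}}\left(\frac{n}{e}\right)^{\frac{n}{b-1}}}\le n.\] *)

(* Defs.v *)
From Stdlib Require Import Reals.
Open Scope R_scope.

Fixpoint factb (b r : nat) : nat :=
  match r with
  | O => 1%nat
  | S r' => (factb b r' * (1 + (b - 1) * S r'))%nat
  end.

(* Main.v *)
Require Import Defs.
From Stdlib Require Import Reals Lra Lia Psatz.
Open Scope R_scope.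

Lemma ln_le_m1 y : 0 < y -> ln y <= y - 1.
Proof. intro Hy. pose proof (exp_ineq1_le (ln y)). rewrite exp_ln in H; lra. Qed.

Lemma ln_ge_m1 y : 0 < y -> 1 - / y <= ln y.
Proof. intro Hy. pose proof (ln_le_m1 (/ y) (Rinv_0_lt_compat _ Hy)).
  rewrite ln_Rinv in H; lra. Qed.

Lemma ln_div x y : 0 < x -> 0 < y -> ln (x / y) = ln x - ln y.
Proof. intros. unfold Rdiv. rewrite ln_mult, ln_Rinv; try lra. apply Rinv_0_lt_compat; lra. Qed.

Lemma exp_mono x y : x <= y -> exp x <= exp y.
Proof. intro H. destruct (Rle_lt_or_eq_dec _ _ H) as [h|h].
  - left. apply exp_increasing; exact h.
  - right. rewrite h. reflexivity. Qed.

Lemma factb_pos b r : (0 < factb b r)%nat.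
Proof. induction r; [simpl; lia|]. change (factb b (S r)) with (factb b r * (1 + (b-1)*S r))%nat. apply Nat.mul_pos_pos; [exact IHr|apply Nat.lt_0_succ]. Qed.

Lemma INR_factb_S b r : (1 <= b)%nat ->
  INR (factb b (S r)) = INR (factb b r) * (1 + (INR b - 1) * INR (S r)).
Proof. intro hb. change (factb b (S r)) with (factb b r * (1 + (b-1)*S r))%nat. rewrite mult_INR, plus_INR, mult_INR, minus_INR; auto with arith.
  Qed.

Lemma key b r (hb : (2 <= b)%nat) :
  let c := INR b - 1 in let N := 1 + c * INR r in
  N * / c * ln N - INR r <= ln (INR (factb b r)) <= ln N + N * / c * ln N - INR r.
Proof.
  intros c N.
  assert (hc : 1 <= c). { unfold c. apply le_INR in hb. simpl in hb. lra. }
  subst N. induction r as [|r IH].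
  - simpl. rewrite Rmult_0_r, Rplus_0_r, ln_1. lra.
  - rewrite INR_factb_S by lia. fold c.
    assert (hF : 0 < INR (factb b r)) by (apply lt_0_INR; apply factb_pos).
    set (N := 1 + c * INR r) in *.
    assert (hN : 1 <= N). { unfold N. pose proof (pos_INR r). nra. }
    assert (hN' : 1 + c * INR (S r) = N + c) by (rewrite S_INR; unfold N; ring).
    rewrite hN'.
    rewrite ln_mult by lra.
    set (k := / c).
    assert (hk : c * k = 1) by (unfold k; field; lra).
    assert (hk0 : 0 < k) by (unfold k; apply Rinv_0_lt_compat; lra).
    assert (hA : ln ((N + c) / N) = ln (N + c) - ln N) by (apply ln_div; lra).
    pose proof (ln_le_m1 ((N + c) / N) ltac:(apply Rdiv_lt_0_compat; lra)) as h1.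
    pose proof (ln_ge_m1 ((N + c) / N) ltac:(apply Rdiv_lt_0_compat; lra)) as h2.
    rewrite hA in h1, h2.
    replace ((N + c) / N - 1) with (c / N) in h1 by (field; lra).
    replace (1 - / ((N + c) / N)) with (c / (N + c)) in h2 by (field; lra).
    assert (h1' : (ln (N + c) - ln N) * N <= c).
    { apply (Rmult_le_compat_r N) in h1; [|lra].
      replace (c / N * N) with c in h1 by (field; lra). lra. }
    assert (h2' : c <= (ln (N + c) - ln N) * (N + c)).
    { apply (Rmult_le_compat_r (N + c)) in h2; [|lra].
      replace (c / (N + c) * (N + c)) with c in h2 by (field; lra). lra. }
    rewrite S_INR.
    set (a := ln (N + c) - ln N) in *.
    assert (e : ln (N + c) = ln N + a) by (unfold a; ring).
    rewrite e. destruct IH as [IH1 IH2]. fold k in IH1, IH2.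
    split.
    + assert (k * (a * N) <= k * c) by (apply Rmult_le_compat_l; lra).
      assert (hk' : k * c = 1) by (rewrite Rmult_comm; exact hk). rewrite hk' in H. assert (E : (N + c) * k = N * k + 1) by (rewrite Rmult_plus_distr_r, hk; ring).
      rewrite E.
      assert (E2 : (N * k + 1) * (ln N + a) = N * k * ln N + ln N + a + k * (a * N)) by ring.
      rewrite E2. lra.
    + assert (k * c <= k * (a * (N + c))) by (apply Rmult_le_compat_l; lra).
      assert (hk' : k * c = 1) by (rewrite Rmult_comm; exact hk). rewrite hk' in H.
      assert (E2 : (N + c) * k * (ln N + a) = N * k * ln N + c * k * ln N + k * (a * (N + c))) by ring.
      rewrite E2, hk. lra.
Qed.

Theorem mainTheorem1 (b n r : nat) (hb : (2 <= b)%nat)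
  (hn : n = (1 + (b - 1) * r)%nat) :
  1 <= INR (factb b r) /
         (exp (1 / (INR b - 1)) * Rpower (INR n / exp 1) (INR n / (INR b - 1)))
  <= INR n.
Proof.
  pose proof (key b r hb) as K. simpl in K.
  set (c := INR b - 1) in *.
  assert (hc : 1 <= c). { unfold c. apply le_INR in hb. simpl in hb. lra. }
  assert (hnN : INR n = 1 + c * INR r).
  { subst n. rewrite plus_INR, mult_INR, minus_INR by lia. reflexivity. }
  rewrite hnN. set (N := 1 + c * INR r) in *.
  assert (hN : 1 <= N). { unfold N. pose proof (pos_INR r). nra. }
  assert (hF : 0 < INR (factb b r)) by (apply lt_0_INR; apply factb_pos).
  assert (hD : exp (1 / c) * Rpower (N / exp 1) (N / c) = exp (N * / c * ln N - INR r)).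
  { unfold Rpower. rewrite <- exp_plus. f_equal.
    rewrite ln_div by (try apply exp_pos; lra). rewrite ln_exp.
    assert (hr : INR r = (N - 1) / c) by (unfold N; field; lra). rewrite hr.
    field. lra. }
  rewrite hD. destruct K as [K1 K2].
  pose proof (exp_pos (N * / c * ln N - INR r)) as hE.
  assert (hF' : INR (factb b r) = exp (ln (INR (factb b r)))) by (rewrite exp_ln; lra).
  assert (hNe : N = exp (ln N)) by (rewrite exp_ln; lra).
  assert (L1 : exp (N * / c * ln N - INR r) <= exp (ln (INR (factb b r)))) by (apply exp_mono; lra).
  assert (L2 : exp (ln (INR (factb b r))) <= exp (ln N) * exp (N * / c * ln N - INR r)) by (rewrite <- exp_plus; apply exp_mono; lra).
  rewrite <- hF' in L1, L2. rewrite <- hNe in L2.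
  set (D := exp (N * / c * ln N - INR r)) in *. clearbody D.
  split.
  - apply (Rmult_le_reg_r D); auto.
    unfold Rdiv. rewrite Rmult_1_l, Rmult_assoc, Rinv_l, Rmult_1_r by lra. lra.
  - apply (Rmult_le_reg_r D); auto.
    unfold Rdiv. rewrite Rmult_assoc, Rinv_l, Rmult_1_r by lra. lra.
Qed.
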